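(* Let $q$ be a prime power, let $m,k$ be integers with $0<k<m$ and $l=\gcd(k,m)$. Let $c\in\mathbb{F}_{q^l}^*$ and $g(x)\in\mathbb{F}_{q^m}[x]$. Then $g(x^{q^k}+x+\delta)+cx$ is a permutation polynomial of $\mathbb{F}_{q^m}$ for every $\delta\in\mathbb{F}_{q^m}$ if and only if $h(x)=g(x)^{q^k}+g(x)+cx$ is a permutation polynomial of $\mathbb{F}_{q^m}$.
   Context: A polynomial $f\in\mathbb{F}_Q[x]$ is a permutation polynomial of $\mathbb{F}_Q$ if the map $c\mapsto f(c)$ is a bijection of $\mathbb{F}_Q$. $\mathbb{F}_{q^l}$ is viewed as a subfield of $\mathbb{F}_{q^m}$ (since $l\mid m$). *)

(* Defs.v *)
From HB Require Import structures.
From mathcomp Require Import all_boot all_order all_algebra all_field.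
Set Implicit Arguments. Unset Strict Implicit. Unset Printing Implicit Defensive.
Import GRing.Theory.
Local Open Scope ring_scope.

Definition perm_poly (F : finFieldType) (f : {poly F}) : Prop :=
  bijective (fun x : F => f.[x]).

Definition prime_power (q : nat) : Prop :=
  exists p r : nat, [/\ prime p, (0 < r)%N & q = (p ^ r)%N].

(* Main.v *)
Require Import Defs.
From HB Require Import structures.
From mathcomp Require Import all_boot all_order all_algebra all_field.
From mathcomp Require Import ring.
Import GRing.Theory.
Local Open Scope ring_scope.

Lemma frobD (F : finFieldType) (q m : nat) (hq : prime_power q)
  (hF : #|F| = (q ^ m)%N) (hm : (0 < m)%N) (k : nat) (x y : F) :
  (x + y) ^+ (q ^ k) = x ^+ (q ^ k) + y ^+ (q ^ k).
Proof.
move: hF; case: hq => p [r [pp r0 ->]] hF.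
have chp : p \in [pchar F].
  by apply: (@card_finPcharP F p (r * m)) => //; rewrite hF expnM.
apply: exprDn_pchar.
rewrite -expnM pnatX (pnatE _ pp) chp //.
Qed.

Theorem lemma2 (F : finFieldType) (q m k : nat)
  (hq : prime_power q) (hF : #|F| = (q ^ m)%N)
  (hk0 : (0 < k)%N) (hkm : (k < m)%N)
  (c : F) (hc0 : c != 0) (hc : c ^+ (q ^ gcdn k m) = c)
  (g : {poly F}) :
  (forall delta : F,
     perm_poly ((g \Po ('X ^+ (q ^ k) + 'X + delta%:P)) + c *: 'X))
  <-> perm_poly (g ^+ (q ^ k) + g + c *: 'X).
Proof.
have hm : (0 < m)%N by apply: leq_trans hkm.
have fD := @frobD F q m hq hF hm k.
have ck : c ^+ (q ^ k) = c.
  have [j ->] : exists j, k = (gcdn k m * j)%N.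
    by exists (k %/ gcdn k m)%N; rewrite mulnC divnK // dvdn_gcdl.
  elim: j => [|j IH]; first by rewrite muln0 expn0 expr1.
  by rewrite mulnS expnD exprM hc IH.
set psi := fun x : F => x ^+ (q ^ k) + x.
set h := fun y : F => (g.[y]) ^+ (q ^ k) + g.[y] + c * y.
set f := fun (d x : F) => g.[psi x + d] + c * x.
have psiD : forall x y, psi (x + y) = psi x + psi y.
  by move=> x y; rewrite /psi fD addrACA.
have psiM : forall x, psi (c * x) = c * psi x.
  by move=> x; rewrite /psi exprMn ck mulrDr.
have key : forall d x, psi (f d x) = h (psi x + d) - c * d.
  move=> d x; rewrite /f psiD psiM /h /psi.
  ring.
have Ef : forall d x,
   ((g \Po ('X ^+ (q ^ k) + 'X + d%:P)) + c *: 'X).[x] = f d x.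
  by move=> d x; rewrite hornerD horner_comp hornerZ hornerX !hornerD
     hornerXn hornerX hornerC.
have Eh : forall y, (g ^+ (q ^ k) + g + c *: 'X).[y] = h y.
  by move=> y; rewrite !hornerD horner_exp hornerZ hornerX.
have q0 : (0 < q ^ k)%N.
  by case: hq => p [r [pp _ ->]]; rewrite -expnM expn_gt0 prime_gt0.
have psi0 : psi 0 = 0 by rewrite /psi expr0n eqn0Ngt q0 addr0.
have psiN : forall x, psi (- x) = - psi x.
  by move=> x; apply/eqP; rewrite -subr_eq0 opprK -psiD addNr psi0.
have psiMa : forall a x, a ^+ (q ^ k) = a -> psi (a * x) = a * psi x.
  by move=> a x ha; rewrite /psi exprMn ha mulrDr.
rewrite /perm_poly; split.
- move=> H.
  have Hf : forall d, bijective (f d).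
    by move=> d; apply: (eq_bij (H d)) => x; rewrite Ef.
  have img : forall w, exists s, h w - c * w = psi s.
    by move=> w; exists (f w 0); rewrite key psi0 add0r.
  apply: injF_bij => u v; rewrite !Eh => huv.
  have [t ht] : exists t, v = u + psi t.
    have [s1 hs1] := img u; have [s2 hs2] := img v.
    have e1 : c * (v - u) = psi (s1 - s2).
      rewrite psiD psiN -hs1 -hs2 huv; ring.
    exists (c^-1 * (s1 - s2)).
    rewrite psiMa; last by rewrite exprVn ck.
    by rewrite -e1 mulrA mulVf // mul1r addrC subrK.
  pose S := [set psi x | x : F].
  pose lam := fun s => h (s + u) - c * u.
  have sub : S \subset lam @: S.
    apply/subsetP => z /imsetP [y _ ->].
    have [gi gK Kg] := Hf u.
    apply/imsetP; exists (psi (gi y)); first by apply/imsetP; exists (gi y).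
    by rewrite /lam -key Kg.
  have cardE : #|lam @: S| = #|S|.
    by apply/eqP; rewrite eqn_leq leq_imset_card subset_leq_card.
  have linj : {in S &, injective lam} by apply/imset_injP; rewrite cardE.
  have : psi t = 0.
    rewrite -psi0; apply: linj;
      [by apply/imsetP; exists t | by apply/imsetP; exists 0 | ].
    by rewrite /lam psi0 add0r (addrC (psi t)) -ht huv.
  by move=> ht0; rewrite ht ht0 addr0.
- move=> H d; apply: injF_bij => x y; rewrite !Ef => hxy.
  have Hi : injective h by move=> a b; rewrite -!Eh; exact: (bij_inj H).
  have h1 : psi (f d x) = psi (f d y) by rewrite hxy.
  move: h1; rewrite !key => /addIr /Hi /addIr hp.
  by move: hxy; rewrite /f hp => /addrI /(mulfI hc0).
Qed.
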